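(* Let $D,\ell\in\mathbb{N}$ and $m=\ell D$. Suppose $H,A\subset[0,1)$ are $2^{-m}$-sets such that $H$ is $(D,\ell,R)$-uniform and $A$ is $(D,\ell,R')$-uniform. Then \[ |A+H|\ge2^{-m/D}|H|\prod_{s\in[\ell]:\,R_s=1}R'_s. \]
   Context: A $2^{-m}$-set is a set all of whose elements are integer multiples of $2^{-m}$. $[\ell]=\{0,\dots,\ell-1\}$. $\mathcal{D}_s$ is the family of dyadic intervals $[j2^{-s},(j+1)2^{-s})$, $\mathcal{D}_s(E)$ those meeting $E$, and $\mathcal{N}(E,s)=|\mathcal{D}_s(E)|$. Given a sequence $(R_s)_{s\in[\ell]}$ with values in $[1,2^D]$, a $2^{-m}$-set $A$ is $(D,\ell,R)$-uniform if $\mathcal{N}(A\cap I,(s+1)D)=R_s$ for every $s\in[\ell]$ and every $I\in\mathcal{D}_{sD}(A)$. $A+H=\{a+h:a\in A,h\in H\}$. *)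

(* Defs.v *)
From HB Require Import structures.
From mathcomp Require Import all_boot all_order all_algebra.
Set Implicit Arguments. Unset Strict Implicit. Unset Printing Implicit Defensive.
Import Order.TTheory GRing.Theory Num.Theory.

(* Encoding: a 2^{-m}-subset of [0,1) is a subset of {k 2^{-m} : 0 <= k < 2^m};
   we represent it by the set of numerators k, i.e. an element of {set 'I_(2^m)}.
   The point k : 'I_(2^m) stands for the real number k / 2^m. *)

(* Index j of the dyadic interval [j 2^{-s}, (j+1) 2^{-s}) of D_s containing
   the point k / 2^m (valid for s <= m):  j = floor(k 2^s / 2^m). *)
Definition dyad (m : nat) (s : nat) (k : 'I_(2 ^ m)) : nat := (val k %/ 2 ^ (m - s))%N.
Arguments dyad : clear implicits.

Definition Ncov (m : nat) (E : {set 'I_(2 ^ m)}) (s : nat) : nat :=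
  size (undup [seq dyad m s k | k <- enum E]).
Arguments Ncov : clear implicits.

Definition uniform (F : numDomainType) (D l : nat) (R : nat -> F)
    (A : {set 'I_(2 ^ (l * D))}) : Prop :=
  forall s : nat, (s < l)%N ->
  forall j : nat, j \in [seq dyad (l * D) (s * D) k | k <- enum A] ->
    ((Ncov (l * D) [set k in A | dyad (l * D) (s * D) k == j] (s.+1 * D))%:R = R s)%R.

(* |A + H| : the sums a + h are multiples of 2^{-m} lying in [0, 2);
   their numerators lie in [0, 2^(m+1)). *)
Arguments uniform {F} D l R A.

Definition sumset (m : nat) (A H : {set 'I_(2 ^ m)}) : {set 'I_(2 ^ m.+1)} :=
  [set x : 'I_(2 ^ m.+1) | [exists a in A, exists h in H, val x == (val a + val h)%N]].

(* Main.v *)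
Require Import Defs.
From HB Require Import structures.
From mathcomp Require Import all_boot all_order all_algebra zify.
Import Order.TTheory GRing.Theory Num.Theory.

Lemma sum_eq_count (s : seq nat) (p : nat) :
  \sum_(c <- s) (c == p : nat) = count_mem p s.
Proof.
elim: s => [|c s IH]; first by rewrite big_nil.
by rewrite big_cons IH /= eq_sym.
Qed.

Lemma sum_eq_le1 (s : seq nat) (p : nat) : uniq s ->
  \sum_(c <- s) (c == p : nat) <= 1.
Proof. by move=> us; rewrite sum_eq_count count_uniq_mem // leq_b1. Qed.

Lemma card_sum (T : finType) (U Y : {set T}) : Y \subset U ->
  #|Y| = \sum_(x in U) (x \in Y : nat).
Proof.
move=> sYU.
have -> : \sum_(x in U) (x \in Y : nat) = \sum_(x in U) (if x \in Y then 1 else 0).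
  by apply: eq_bigr => x _; case: (x \in Y).
rewrite -big_mkcondr sum1dep_card; apply: eq_card => x; rewrite !inE.
by case xY: (x \in Y); rewrite ?andbT ?andbF // (subsetP sYU).
Qed.

Lemma overlap (T : finType) (s : seq nat) (f : nat -> {set T}) (U : {set T})
  (g : T -> nat) (e : nat) :
 uniq s -> (forall c, c \in s -> f c \subset U) ->
 (forall c x, c \in s -> x \in f c -> g x = c + e \/ g x = (c + e).+1) ->
 \sum_(c <- s) #|f c| <= 2 * #|U|.
Proof.
move=> us sub loc.
rewrite (eq_big_seq (fun c => \sum_(x in U) (x \in f c : nat))); last first.
  by move=> c cs; apply: card_sum; apply: sub.
rewrite exchange_big /= -sum1_card big_distrr /=.
apply: leq_sum => x _.
apply: (@leq_trans (\sum_(c <- s) ((c == g x - e : nat) + (c == (g x - e).-1 : nat)))).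
  rewrite [X in _ <= X]big_seq [X in X <= _]big_seq.
  apply: leq_sum => c cs.
  case xf: (x \in f c) => //=.
  have [->|->] := loc c x cs xf.
    by rewrite addnK eqxx.
  by rewrite subSn ?leq_addl // addnK /= eqxx addn1.
rewrite big_split /= muln1.
have := @sum_eq_le1 s (g x - e) us; have := @sum_eq_le1 s (g x - e).-1 us.
lia.
Qed.

Lemma card_part (T : finType) (Y : {set T}) (g : T -> nat) (s : seq nat) :
  uniq s -> (forall k, k \in Y -> g k \in s) ->
  \sum_(c <- s) #|[set k in Y | g k == c]| = #|Y|.
Proof.
move=> us gs.
rewrite (eq_bigr (fun c => \sum_(x in Y) (x \in [set k in Y | g k == c] : nat))); last first.
  by move=> c _; apply: card_sum; apply/subsetP => x; rewrite inE => /andP [].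
rewrite exchange_big /= -sum1_card; apply: eq_bigr => x xY.
rewrite (eq_bigr (fun c => (c == g x : nat))); last by move=> c _; rewrite inE xY eq_sym.
by rewrite sum_eq_count count_uniq_mem // gs.
Qed.

Lemma dyad_parent m D t (k k' : 'I_(2 ^ m)) : t.+1 * D <= m ->
  dyad m (t.+1 * D) k = dyad m (t.+1 * D) k' -> dyad m (t * D) k = dyad m (t * D) k'.
Proof.
move=> le; rewrite /dyad.
have -> : m - t * D = (m - t.+1 * D) + D by rewrite mulSn in le *; lia.
by rewrite expnD !divnMA => ->.
Qed.

Lemma dyad0 m D (k : 'I_(2 ^ m)) : dyad m (0 * D) k = 0.
Proof. by rewrite /dyad mul0n subn0 divn_small //; apply: ltn_ord. Qed.

Lemma dyad_sumloc m s (a h : 'I_(2 ^ m)) :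
  let d := 2 ^ (m - s) in
  (a + h) %/ d = dyad m s a + dyad m s h \/ (a + h) %/ d = (dyad m s a + dyad m s h).+1.
Proof.
move=> d; rewrite divnD ?expn_gt0 //.
by case: (d <= _); [right; rewrite addn1 | left; rewrite addn0].
Qed.

Lemma sumset_sub m (X X' Y Y' : {set 'I_(2 ^ m)}) :
  X \subset X' -> Y \subset Y' -> sumset X Y \subset sumset X' Y'.
Proof.
move=> sX sY; apply/subsetP => x; rewrite !inE => /existsP [a /andP [aX /existsP [h /andP [hY e]]]].
apply/existsP; exists a; rewrite (subsetP sX _ aX) /=; apply/existsP; exists h.
by rewrite (subsetP sY _ hY).
Qed.

Lemma card_le_sumset m (X Y : {set 'I_(2 ^ m)}) a : a \in X -> #|Y| <= #|sumset X Y|.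
Proof.
move=> aX.
have lt : forall h : 'I_(2 ^ m), a + h < 2 ^ m.+1.
  by move=> h; rewrite expnS; have := ltn_ord a; have := ltn_ord h; lia.
pose f := fun h => Ordinal (lt h).
rewrite -(@card_imset _ _ f Y); last by move=> h1 h2 /(congr1 val) /= /addnI /val_inj.
apply: subset_leq_card; apply/subsetP => x /imsetP [h hY ->]; rewrite inE.
by apply/existsP; exists a; rewrite aX; apply/existsP; exists h; rewrite hY /=.
Qed.

Local Open Scope ring_scope.

Definition blk m (X : {set 'I_(2 ^ m)}) (s j : nat) : {set 'I_(2 ^ m)} :=
  [set k in X | dyad m s k == j].
Arguments blk {m}.

Definition Pclaim {F : realFieldType} {D l : nat} (R R' : nat -> F)
    (H A : {set 'I_(2 ^ (l * D))}) (t : nat) : Prop :=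
  forall (jH jA : nat) (a : 'I_(2 ^ (l * D))), a \in blk A (t * D) jA ->
  (#|blk H (t * D) jH|%:R * \prod_(t <= s < l | R s == 1) R' s
   <= 2 ^+ (l - t) * #|sumset (blk A (t * D) jA) (blk H (t * D) jH)|%:R :> F).

Lemma base_claim (F : realFieldType) D l (R R' : nat -> F) (H A : {set 'I_(2 ^ (l * D))}) :
  Pclaim R R' H A l.
Proof.
move=> jH jA a aA; rewrite subnn expr0 mul1r big_geq // mulr1 ler_nat.
exact: card_le_sumset aA.
Qed.

Lemma sum_const_seq (F : realFieldType) (s : seq nat) (K : F) :
  \sum_(c <- s) K = (size s)%:R * K.
Proof.
by rewrite -sum1_size natr_sum mulr_suml; apply: eq_bigr => c _; rewrite mul1r.
Qed.

Lemma step_claim (F : realFieldType) D l (R R' : nat -> F)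
    (H A : {set 'I_(2 ^ (l * D))}) t :
  (t < l)%N -> uniform D l R H -> uniform D l R' A ->
  Pclaim R R' H A t.+1 -> Pclaim R R' H A t.
Proof.
move=> tl uH uA IH jH jA a aA.
have tD : (t.+1 * D <= l * D)%N by apply: leq_mul.
pose g := fun k : 'I_(2 ^ (l * D)) => dyad (l * D) (t.+1 * D) k.
have par : forall k k', g k = g k' -> dyad (l * D) (t * D) k = dyad (l * D) (t * D) k'.
  by move=> k k'; apply: dyad_parent.
pose gx := fun x : 'I_(2 ^ (l * D).+1) => (val x %/ 2 ^ (l * D - t.+1 * D))%N.
have loc : forall (x : 'I_(2 ^ (l * D).+1)) cX cY,
    x \in sumset (blk A (t.+1 * D) cX) (blk H (t.+1 * D) cY) ->
    gx x = (cX + cY)%N \/ gx x = (cX + cY).+1.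
  move=> x cX cY; rewrite /gx inE => /existsP [a' /andP [aA' /existsP [h' /andP [hH' /eqP ->]]]].
  rewrite !inE in aA' hH'; case/andP: aA' => _ /eqP <-; case/andP: hH' => _ /eqP <-.
  exact: dyad_sumloc.
have Pr : \prod_(t <= s < l | R s == 1) R' s =
    (if R t == 1 then R' t else 1) * \prod_(t.+1 <= s < l | R s == 1) R' s.
  by rewrite big_ltn_cond //; case: ifP; rewrite ?mul1r.
have e2 : 2 ^+ (l - t) = 2 * 2 ^+ (l - t.+1) :> F.
  by rewrite -exprS; congr (_ ^+ _); lia.
have [Hempty | [h0 h0H]] : blk H (t * D) jH = set0 \/ exists h0, h0 \in blk H (t * D) jH.
  by case: (set_0Vmem (blk H (t * D) jH)) => [->|[x xH]]; [left | right; exists x].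
  rewrite Hempty cards0 mul0r; apply: mulr_ge0 => //; exact: exprn_ge0.
set CH := undup [seq g k | k <- enum (blk H (t * D) jH)].
have CHu : uniq CH := undup_uniq _.
have gCH : forall k, k \in blk H (t * D) jH -> g k \in CH.
  by move=> k kH; rewrite mem_undup map_f // mem_enum.
have childH : forall c, c \in CH ->
    blk H (t.+1 * D) c = [set k in blk H (t * D) jH | g k == c].
  move=> c; rewrite mem_undup => /mapP [k0]; rewrite mem_enum => k0H ->.
  apply/setP => k; rewrite !inE; move: k0H; rewrite !inE => /andP [_ /eqP <-].
  case kH: (k \in H) => //=; case e: (g k == g k0); rewrite ?andbF ?andbT //.
  by rewrite (par _ _ (eqP e)) eqxx.
have jHin : jH \in [seq dyad (l * D) (t * D) k | k <- enum H].
  by move: h0H; rewrite inE => /andP [h0H /eqP <-]; rewrite map_f // mem_enum.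
have aA0 : a \in A by move: aA; rewrite inE => /andP [].
have jAin : jA \in [seq dyad (l * D) (t * D) k | k <- enum A].
  by move: aA; rewrite inE => /andP [_ /eqP <-]; rewrite map_f // mem_enum.
case: (eqVneq (R t) 1) => Rt1.
- have szCH : size CH = 1%N.
    have := uH t tl jH jHin; rewrite Rt1 => hh.
    by apply/eqP; rewrite -(pnatr_eq1 F); apply/eqP; exact: hh.
  pose c0 := head 0%N CH.
  have CHe : CH = [:: c0] by rewrite /c0; case: (CH) szCH => [|x [|]].
  have c0in : c0 \in CH by rewrite CHe mem_head.
  have Heq : blk H (t.+1 * D) c0 = blk H (t * D) jH.
    apply/setP => k; rewrite childH // inE.
    case kb: (k \in blk H (t * D) jH) => //=.
    by have := gCH k kb; rewrite CHe inE.
  rewrite Pr Rt1 eqxx.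
  set CA := undup [seq g k | k <- enum (blk A (t * D) jA)].
  have szCA : (size CA)%:R = R' t := uA t tl jA jAin.
  rewrite -szCA -Heq mulrCA -sum_const_seq big_seq.
  apply: (@le_trans _ _ (\sum_(c <- CA | c \in CA) 2 ^+ (l - t.+1) *
      #|sumset (blk A (t.+1 * D) c) (blk H (t.+1 * D) c0)|%:R)).
    apply: ler_sum => c; rewrite mem_undup => /mapP [k]; rewrite mem_enum => kA ->.
    apply: (IH _ _ k); rewrite inE eqxx andbT.
    by move: kA; rewrite inE => /andP [].
  rewrite -big_seq -mulr_sumr -natr_sum e2 -mulrA [X in _ <= X]mulrCA ler_wpM2l //; first by apply: exprn_ge0.
  rewrite -natrM ler_nat.
  apply: (@overlap _ CA _ _ gx c0 (undup_uniq _)).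
    move=> c; rewrite mem_undup => /mapP [k0]; rewrite mem_enum => k0A ->.
    apply: sumset_sub; last by rewrite Heq.
    apply/subsetP => k; rewrite !inE => /andP [kA /eqP e]; rewrite kA /=.
    by move: k0A; rewrite inE => /andP [_ /eqP <-]; rewrite (par _ _ e).
  by move=> c x _; apply: loc.
- rewrite Pr (negbTE Rt1) mul1r.
  have aA1 : a \in blk A (t.+1 * D) (g a) by rewrite inE aA0 eqxx.
  have sA : blk A (t.+1 * D) (g a) \subset blk A (t * D) jA.
    apply/subsetP => k; rewrite !inE => /andP [kA /eqP e]; rewrite kA /=.
    by move: aA; rewrite inE => /andP [_ /eqP <-]; rewrite (par _ _ e).
  rewrite -(card_part _ _ _ _ CHu gCH).
  rewrite (eq_big_seq (fun c => #|blk H (t.+1 * D) c|)); last first.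
    by move=> c cc; rewrite childH.
  rewrite natr_sum mulr_suml big_seq.
  apply: (@le_trans _ _ (\sum_(c <- CH | c \in CH) 2 ^+ (l - t.+1) *
      #|sumset (blk A (t.+1 * D) (g a)) (blk H (t.+1 * D) c)|%:R)).
    by apply: ler_sum => c _; apply: (IH _ _ a).
  rewrite -big_seq -mulr_sumr -natr_sum e2 -mulrA [X in _ <= X]mulrCA ler_wpM2l //; first by apply: exprn_ge0.
  rewrite -natrM ler_nat.
  apply: (@overlap _ CH _ _ gx (g a) CHu).
    move=> c cc; apply: sumset_sub => //.
    by rewrite childH //; apply/subsetP => k; rewrite inE => /andP [].
  by move=> c x _ xin; rewrite addnC; apply: loc.
Qed.

Theorem mainTheorem11 (F : realFieldType) (D l : nat) (R R' : nat -> F)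
    (H A : {set 'I_(2 ^ (l * D))}) :
  (0 < D)%N ->
  (forall s : nat, (s < l)%N -> 1 <= R s <= 2 ^+ D) ->
  (forall s : nat, (s < l)%N -> 1 <= R' s <= 2 ^+ D) ->
  uniform D l R H ->
  uniform D l R' A ->
  A != set0 ->
  (2 ^- l) * (#|H|%:R) * (\prod_(s < l | R s == 1) R' s)
    <= (#|sumset A H|%:R : F).
Proof.
move=> D0 _ _ uH uA An0.
have claim : forall n, (n <= l)%N -> Pclaim R R' H A (l - n).
  elim=> [|n IHn] nl; first by rewrite subn0; apply: base_claim.
  have e : (l - n = (l - n.+1).+1)%N by lia.
  apply: step_claim => //; first by lia.
  by rewrite -e; apply: IHn; lia.
have [a aA] : exists a, a \in A.
  by case: (set_0Vmem A) An0 => [->|[x xA]]; [rewrite eqxx | exists x].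
have blk0 : forall X : {set 'I_(2 ^ (l * D))}, blk X (0 * D) 0%N = X.
  by move=> X; apply/setP => k; rewrite inE dyad0 eqxx andbT.
have := claim l (leqnn l) 0%N 0%N a; rewrite subnn subn0 !blk0 => /(_ aA) h.
rewrite -mulrA ler_pdivrMl; last by apply: exprn_gt0.
by rewrite -(big_mkord (fun s => R s == 1)).
Qed.
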